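(* In the standing setup below, assume that the restriction of $h$ to $\Omega$ is one-to-one and $0\notin h(\Omega)$. Let $\gamma\in F$ be such that there is a non-zero vector $v\in\mathcal K_\infty(B,x)$ with $Bv=h(\gamma)v$ and $Av\neq0$. Then $\gamma$ is observable.
   Context: Standing setup. Let $\mathbb G$ be a locally compact abelian group (written additively) with Haar measure $dg$ and Pontryagin dual $\widehat{\mathbb G}$ (the group of continuous unitary characters $\gamma:\mathbb G\to\mathbb T$). A weight is a measurable, locally bounded, even function $w:\mathbb G\to[1,\infty)$ with $w(g_1+g_2)\le w(g_1)w(g_2)$ for all $g_1,g_2$; it is assumed to satisfy the Beurling–Domar condition $\sum_{n=0}^\infty \frac{\ln w(ng)}{1+n^2}<\infty$ for all $g\in\mathbb G$, where $ng=g+\dots+g$ ($n$ times). $L_w(\mathbb G)$ is the Banach algebra of functions $f$ with $\|f\|_w=\int_{\mathbb G}|f(g)|w(g)\,dg<\infty$, with convolution as multiplication, and $\hat f(\gamma)=\int_{\mathbb G}f(g)\gamma(-g)\,dg$. Let $\mathcal X$ be a complex Banach space and $\mathcal T:\mathbb G\to B(\mathcal X)$ a strongly continuous group representation with $\|\mathcal T(g)\|\le w(g)$ for all $g$. $\mathcal X$ is an $L_w(\mathbb G)$-module via $fx=\int_{\mathbb G}f(g)\mathcal T(-g)x\,dg$, assumed non-degenerate ($fx=0$ for all $f$ implies $x=0$). The Beurling spectrum of $N\subseteq\mathcal X$ is $\Lambda(N)=\{\gamma\in\widehat{\mathbb G}:$ for every $f\in L_w(\mathbb G)$ with $\hat f(\gamma)\ne0$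 there is $x\in N$ with $fx\neq0\}$; $\Lambda(x):=\Lambda(\{x\})$. For closed $F\subseteq\widehat{\mathbb G}$, $\mathcal X(F)=\{x\in\mathcal X:\Lambda(x)\subseteq F\}$ and $\mathcal X_\gamma:=\mathcal X(\{\gamma\})$. Fixed data: a set $\Omega\subseteq\widehat{\mathbb G}$ and integers $M,\kappa\ge1$ such that for every $\gamma\in\Omega$, $\mathcal X_\gamma$ has finite dimension $m_\gamma\le M$, with a basis $x_\gamma^1,\dots,x_\gamma^{m_\gamma}$. $F\subseteq\Omega$ is a finite set of cardinality $\kappa$ and $x=\sum_{\gamma\in F}\sum_{m=1}^{m_\gamma}c_{\gamma m}x_\gamma^m$ with $c_{\gamma m}\in\mathbb C$, where for each $\gamma\in F$ some $c_{\gamma m}\ne0$. $A:\mathcal X\to\mathbb C^S$ ($S\in\mathbb N$) is a linear operator and $B=\sum_{n=1}^N b_n\mathcal T(g_n)$ with $g_n\in\mathbb G$, $b_n\in\mathbb C\setminus\{0\}$; set $h(\gamma)=\sum_{n=1}^N b_n\gamma(g_n)$ for $\gamma\in\widehat{\mathbb G}$. The measurements are $y_\ell=AB^\ell x$, $\ell=0,1,2,\dots$. The polynomial $p_{\min}(z)=\sum_{\ell=0}^{\kappa M}\alpha_\ell z^\ell$ has coefficients satisfying $\alpha_{\kappa M}=1$ and $\sum_{\ell=0}^{\kappa M}\alpha_\ell y_{\ell+k}=0$ for all $k=0,1,2,\dots$; if such coefficients are not unique, one chooses those for which the largest possible number of initial coefficients vanish, $\alpha_0=\alpha_1=\dots=\alpha_j=0$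 with $j$ maximal. $R_{\min}$ denotes the set of non-zero roots of $p_{\min}$. The maximal Krylov subspace is $\mathcal K_\infty(B,x)=\mathrm{span}\{x,Bx,B^2x,\dots\}$. A spectral value $\gamma\in F$ is called observable if the restriction of $h$ to $\Omega$ is one-to-one, $0\notin h(\Omega)$, and $h(\gamma)\in R_{\min}$. *)

(* Defs.v *)
From HB Require Import structures.
From mathcomp Require Import all_boot all_order all_algebra.
From mathcomp Require Import all_classical all_reals all_analysis.
From mathcomp Require Import complex.

Set Implicit Arguments.
Unset Strict Implicit.
Unset Printing Implicit Defensive.

Import Order.TTheory GRing.Theory Num.Theory.
Import numFieldTopology.Exports.
Import numFieldNormedType.Exports.
Local Open Scope classical_set_scope.
Local Open Scope ring_scope.
Local Open Scope complex_scope.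

Definition CC (R : realType) : numClosedFieldType := R[i].

Section PointedGroup.
Variable G : topologicalZmodType.
Definition ptG : Type := G.
HB.instance Definition _ := Topological.on ptG.
HB.instance Definition _ := isPointed.Build ptG (0 : G).
End PointedGroup.

Notation borelT G := (g_sigma_algebraType (@open (ptG G))).

Definition haar_measure (R : realType) (G : topologicalZmodType)
  (mu : {measure set (borelT G) -> \bar R}) : Prop :=
  [/\ (0 < mu setT)%E,
      (forall (A : set (borelT G)) (g : G), measurable A ->
         mu [set (a : G) + g | a in (A : set G)] = mu A),
      (forall K : set G, compact K -> (mu K < +oo)%E),
      (forall A : set (borelT G), measurable A ->
         mu A = ereal_inf [set mu U | U in [set U : set G | open U /\ A `<=` U]]) &
      (forall U : set G, open U ->
         mu U = ereal_sup [set mu K | K in [set K : set G | compact K /\ K `<=` U]])].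

Definition cint (R : realType) d (T : measurableType d)
  (mu : {measure set T -> \bar R}) (f : T -> CC R) : CC R :=
  (Rintegral mu setT (fun t => complex.Re (f t)))%:C
  + 'i * (Rintegral mu setT (fun t => complex.Im (f t)))%:C.

Definition weight (R : realType) (G : topologicalZmodType) (w : G -> R) : Prop :=
  [/\ measurable_fun [set: borelT G] (w : borelT G -> R),
      (forall g : G, exists Mb : R, \forall y \near g, w y <= Mb),
      (forall g, w (- g) = w g),
      (forall g, 1 <= w g) &
      (forall g1 g2, w (g1 + g2) <= w g1 * w g2)].

Definition beurling_domar (R : realType) (G : topologicalZmodType) (w : G -> R) : Prop :=
  forall g : G, cvgn (series (fun n : nat => ln (w (g *+ n)) / (1 + (n%:R) ^+ 2))).

Definition character (R : realType) (G : topologicalZmodType) (gam : G -> CC R) : Prop :=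
  [/\ continuous gam,
      (forall a b, gam (a + b) = gam a * gam b) &
      (forall a, ComplexField.Normc.normc (gam a) = 1)].

Definition in_Lw (R : realType) (G : topologicalZmodType)
  (mu : {measure set (borelT G) -> \bar R}) (w : G -> R) (f : G -> CC R) : Prop :=
  [/\ measurable_fun [set: borelT G] (fun g : borelT G => complex.Re (f g)),
      measurable_fun [set: borelT G] (fun g : borelT G => complex.Im (f g)) &
      (\int[mu]_(g in [set: borelT G]) ((ComplexField.Normc.normc (f g) * w g)%:E) < +oo)%E].

Definition fhat (R : realType) (G : topologicalZmodType)
  (mu : {measure set (borelT G) -> \bar R}) (f : G -> CC R) (gam : G -> CC R) : CC R :=
  cint mu (fun g : borelT G => f g * gam (- g)).

Definition functional (R : realType) (X : normedModType (CC R)) (phi : X -> CC R) : Prop :=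
  (forall (a : CC R) (u v : X), phi (a *: u + v) = a * phi u + phi v) /\ continuous phi.

Definition representation (R : realType) (G : topologicalZmodType)
  (X : normedModType (CC R)) (w : G -> R) (T : G -> X -> X) : Prop :=
  [/\ (forall g (a : CC R) (u v : X), T g (a *: u + v) = a *: T g u + T g v),
      (forall u, T 0 u = u),
      (forall g1 g2 u, T (g1 + g2) u = T g1 (T g2 u)),
      (forall u, continuous (fun g : G => T g u)) &
      (forall g u, `|T g u| <= (w g)%:C * `|u|)].

(* f x = int f(g) T(-g) x dg  is zero.  The Bochner integral is not available;
   by Hahn-Banach, f x = 0 iff every continuous linear functional kills it,
   i.e. iff int f(g) phi(T(-g)x) dg = 0 for all such phi. *)
Definition act_zero (R : realType) (G : topologicalZmodType)
  (mu : {measure set (borelT G) -> \bar R}) (X : normedModType (CC R)) (T : G -> X -> X)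
  (f : G -> CC R) (x : X) : Prop :=
  forall phi : X -> CC R, functional phi ->
    cint mu (fun g : borelT G => f g * phi (T (- g) x)) = 0.

Definition beurling_spectrum (R : realType) (G : topologicalZmodType)
  (mu : {measure set (borelT G) -> \bar R}) (w : G -> R) (X : normedModType (CC R))
  (T : G -> X -> X) (N : set X) : set (G -> CC R) :=
  [set gam | character gam /\
     forall f, in_Lw mu w f -> fhat mu f gam != 0 ->
       exists2 y, N y & ~ act_zero mu T f y].

Definition spectral_subspace (R : realType) (G : topologicalZmodType)
  (mu : {measure set (borelT G) -> \bar R}) (w : G -> R) (X : normedModType (CC R))
  (T : G -> X -> X) (F : set (G -> CC R)) : set X :=
  [set y | beurling_spectrum mu w T [set y] `<=` F].

Definition eigen_subspace (R : realType) (G : topologicalZmodType)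
  (mu : {measure set (borelT G) -> \bar R}) (w : G -> R) (X : normedModType (CC R))
  (T : G -> X -> X) (gam : G -> CC R) : set X :=
  spectral_subspace mu w T [set gam].

Definition is_basis (R : realType) (X : normedModType (CC R)) (V : set X)
  (m : nat) (xb : nat -> X) : Prop :=
  [/\ (forall i, (i < m)%N -> V (xb i)),
      (forall c : nat -> CC R, \sum_(i < m) c i *: xb i = 0 ->
          forall i, (i < m)%N -> c i = 0) &
      (forall y, V y -> exists c : nat -> CC R, y = \sum_(i < m) c i *: xb i)].

Definition Bop (R : realType) (G : zmodType) (X : lmodType (CC R)) (T : G -> X -> X)
  (N : nat) (gs : 'I_N -> G) (bs : 'I_N -> CC R) (u : X) : X :=
  \sum_(n < N) bs n *: T (gs n) u.

Definition hfun (R : realType) (G : zmodType) (N : nat) (gs : 'I_N -> G)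
  (bs : 'I_N -> CC R) (gam : G -> CC R) : CC R :=
  \sum_(n < N) bs n * gam (gs n).

Definition krylov (R : realType) (X : lmodType (CC R)) (B : X -> X) (x : X) : set X :=
  [set v | exists (n : nat) (c : nat -> CC R), v = \sum_(i < n) c i *: iter i B x].

(* Coefficients alpha_0..alpha_K (K = kappa M) of a monic annihilator of the
   measurement sequence y. *)
Definition annihilating (R : realType) (S K : nat) (y : nat -> 'rV[CC R]_S)
  (alpha : nat -> CC R) : Prop :=
  alpha K = 1 /\ forall k : nat, \sum_(l < K.+1) alpha l *: y (l + k)%N = 0.

(* The choice made for p_min: among annihilating coefficient vectors, one with the
   largest number of vanishing initial coefficients. *)
Definition pmin_coeffs (R : realType) (S K : nat) (y : nat -> 'rV[CC R]_S)
  (alpha : nat -> CC R) : Prop :=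
  annihilating K y alpha /\
  forall alpha' : nat -> CC R, annihilating K y alpha' ->
    forall j : nat, (forall i, (i <= j)%N -> alpha' i = 0) ->
      (forall i, (i <= j)%N -> alpha i = 0).

Definition pmin (R : realType) (K : nat) (alpha : nat -> CC R) : {poly (CC R)} :=
  \poly_(i < K.+1) alpha i.

Definition Rmin (R : realType) (K : nat) (alpha : nat -> CC R) : set (CC R) :=
  [set z | z != 0 /\ root (pmin K alpha) z].

Definition observable (R : realType) (G : Type) (Omega : set (G -> CC R))
  (h : (G -> CC R) -> CC R) (Rm : set (CC R)) (gam : G -> CC R) : Prop :=
  [/\ (forall a b, Omega a -> Omega b -> h a = h b -> a = b),
      ~ (exists a, Omega a /\ h a = 0) &
      Rm (h gam)].

(* Main.v *)
Require Import Defs.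
From HB Require Import structures.
From mathcomp Require Import all_boot all_order all_algebra.
From mathcomp Require Import all_classical all_reals all_analysis.
From mathcomp Require Import complex.
Import Order.TTheory GRing.Theory Num.Theory.
Import numFieldTopology.Exports.
Import numFieldNormedType.Exports.
Local Open Scope classical_set_scope.
Local Open Scope ring_scope.
Section Lin.
Variables (K : comNzRingType) (U V : lmodType K) (f : U -> V).
Hypothesis fl : forall (a : K) u v, f (a *: u + v) = a *: f u + f v.
Lemma fl0 : f 0 = 0.
Proof. have H := fl 1 0 0. rewrite !scale1r addr0 in H. have H2 : f 0 + 0 = f 0 + f 0 by rewrite addr0. by rewrite (addrI _ H2). Qed.
Lemma flZ a u : f (a *: u) = a *: f u.
Proof. by rewrite -[a *: u]addr0 fl fl0 addr0. Qed.
Lemma flD u v : f (u + v) = f u + f v.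
Proof. by rewrite -{1}[u]scale1r fl scale1r. Qed.
Lemma flsum n (c : nat -> K) (u : nat -> U) :
  f (\sum_(i < n) c i *: u i) = \sum_(i < n) c i *: f (u i).
Proof.
elim: n => [|n IH]; first by rewrite !big_ord0 fl0.
by rewrite !big_ord_recr /= flD flZ IH.
Qed.
End Lin.
Theorem proposition2p3
  (R : realType) (G : topologicalZmodType)
  (G_lc : locally_compact [set: G]) (G_T2 : hausdorff_space G)
  (mu : {measure set (borelT G) -> \bar R}) (mu_haar : haar_measure mu)
  (w : G -> R) (w_weight : weight w) (w_BD : beurling_domar w)
  (X : completeNormedModType (CC R)) (T : G -> X -> X)
  (T_rep : representation w T)
  (nondeg : forall u : X, (forall f, in_Lw mu w f -> act_zero mu T f u) -> u = 0)
  (Omega : set (G -> CC R)) (M kappa : nat) (M_pos : (0 < M)%N) (kappa_pos : (0 < kappa)%N)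
  (mdim : (G -> CC R) -> nat) (xb : (G -> CC R) -> nat -> X)
  (HOmega : forall gam, Omega gam ->
     [/\ character gam, (mdim gam <= M)%N &
         is_basis (eigen_subspace mu w T gam) (mdim gam) (xb gam)])
  (Fi : 'I_kappa -> (G -> CC R)) (Fi_inj : injective Fi)
  (Fi_Omega : forall i, Omega (Fi i))
  (c : 'I_kappa -> nat -> CC R)
  (c_nz : forall i, exists2 j, (j < mdim (Fi i))%N & c i j != 0)
  (x : X) (x_def : x = \sum_(i < kappa) \sum_(j < mdim (Fi i)) c i j *: xb (Fi i) j)
  (S : nat) (A : X -> 'rV[CC R]_S)
  (A_lin : forall (a : CC R) (u v : X), A (a *: u + v) = a *: A u + A v)
  (N : nat) (gs : 'I_N -> G) (bs : 'I_N -> CC R) (bs_nz : forall n, bs n != 0)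
  (alpha : nat -> CC R)
  (Halpha : pmin_coeffs (kappa * M) (fun l : nat => A (iter l (Bop T gs bs) x)) alpha)
  (h_inj : forall a b, Omega a -> Omega b -> hfun gs bs a = hfun gs bs b -> a = b)
  (h_nz : ~ (exists a, Omega a /\ hfun gs bs a = 0))
  (gam : G -> CC R) (gam_F : exists i, Fi i = gam)
  (v : X) (v_nz : v != 0) (v_K : krylov (Bop T gs bs) x v)
  (v_eig : Bop T gs bs v = hfun gs bs gam *: v) (Av_nz : A v != 0) :
  observable Omega (hfun gs bs) (Rmin (kappa * M) alpha) gam.
Proof.
have [i0 Hi0] := gam_F.
have Og : Omega gam by rewrite -Hi0.
split => //.
set B := Bop T gs bs.
set lam := hfun gs bs gam.
have [Tlin _ _ _ _] := T_rep.
have Blin : forall (a : CC R) (u v0 : X), B (a *: u + v0) = a *: B u + B v0.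
  move=> a u v0; rewrite /B /Bop scaler_sumr -big_split /=.
  apply: eq_bigr => n _; rewrite Tlin scalerDr !scalerA mulrC //.
have Iterlin : forall l (a : CC R) (u v0 : X),
    iter l B (a *: u + v0) = a *: iter l B u + iter l B v0.
  by elim=> [//|l IH] a u v0; rewrite /= IH Blin.
set K := (kappa * M)%N.
pose P (u : X) := \sum_(l < K.+1) alpha l *: A (iter l B u).
have Plin : forall (a : CC R) (u v0 : X), P (a *: u + v0) = a *: P u + P v0.
  move=> a u v0; rewrite /P scaler_sumr -big_split /=.
  by apply: eq_bigr => l _; rewrite Iterlin A_lin scalerDr !scalerA mulrC.
have [[_ Hann] _] := Halpha.
have Pk : forall k, P (iter k B x) = 0.
  move=> k; rewrite -(Hann k) /P; apply: eq_bigr => l _; by rewrite -iterD.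
have Pv : P v = 0.
  have [n [cc ->]] := v_K.
  rewrite (@flsum _ _ _ P Plin); apply: big1 => i _; by rewrite Pk scaler0.
have Itv : forall l, iter l B v = lam ^+ l *: v.
  by elim=> [|l IH]; rewrite ?scale1r //= IH (@flZ _ _ _ B Blin) /B v_eig scalerA exprSr.
have : (pmin K alpha).[lam] *: A v = 0.
  rewrite -Pv /P horner_poly scaler_suml; apply: eq_bigr => l _.
  by rewrite Itv (@flZ _ _ _ A A_lin) scalerA.
move/eqP; rewrite scaler_eq0 (negbTE Av_nz) orbF => /eqP Hr.
split; last by rewrite /root Hr.
by apply/eqP => h0; apply: h_nz; exists gam.
Qed.
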